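(* Let $J$ be a countable set and $\mathcal{A}$ the (non-unital) algebra of functions $f:J\to\mathbb{R}$ with $f(i)=0$ for all but finitely many $i\in J$, with pointwise operations; for $i\in J$ let $e_i$ be the characteristic function of $\{i\}$. Let $\sigma:J\to J$ be a bijection and $\tilde{\sigma}:\mathcal{A}\to\mathcal{A}$, $\tilde{\sigma}(f)=f\circ\sigma^{-1}$. An $\mathbb{R}$-linear map $\Delta:\mathcal{A}\to\mathcal{A}$ is a $\tilde{\sigma}$-derivation if and only if for every $i\in J$: (1) $\Delta(e_i)(\sigma(i))=-\Delta(e_{\sigma(i)})(\sigma(i))$, and (2) $\Delta(e_i)(k)=0$ for all $k\notin\{i,\sigma(i)\}$.
   Context: A $\tilde{\sigma}$-derivation is an $\mathbb{R}$-linear map $\Delta:\mathcal{A}\to\mathcal{A}$ with $\Delta(fg)=\tilde{\sigma}(f)\Delta(g)+\Delta(f)g$ for all $f,g\in\mathcal{A}$. *)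

(* Defs.v *)
From HB Require Import structures.
From mathcomp Require Import all_boot all_order all_algebra.
From mathcomp Require Import reals.
Set Implicit Arguments. Unset Strict Implicit. Unset Printing Implicit Defensive.
Import Order.TTheory GRing.Theory Num.Theory.
Local Open Scope ring_scope.

Record fsf (R : realType) (J : countType) := FSF {
  fsf_fun :> J -> R;
  fsf_fin : exists s : seq J, forall i, i \notin s -> fsf_fun i = 0 }.

Record bij (J : Type) := Bij {
  bij_fun :> J -> J;
  bij_inv : J -> J;
  bij_K : cancel bij_fun bij_inv;
  bij_invK : cancel bij_inv bij_fun }.

Section Ops.
Variables (R : realType) (J : countType).

Lemma fsf_add_fin (f g : fsf R J) :
  exists s : seq J, forall i, i \notin s -> f i + g i = 0.
Proof.
case: (fsf_fin f) => s1 H1; case: (fsf_fin g) => s2 H2.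
exists (s1 ++ s2) => i; rewrite mem_cat negb_or => /andP [a b].
by rewrite H1 // H2 // addr0.
Qed.
Definition fsf_add (f g : fsf R J) : fsf R J := FSF (fsf_add_fin f g).

Lemma fsf_mul_fin (f g : fsf R J) :
  exists s : seq J, forall i, i \notin s -> f i * g i = 0.
Proof.
case: (fsf_fin f) => s1 H1; exists s1 => i Hi; by rewrite H1 // mul0r.
Qed.
Definition fsf_mul (f g : fsf R J) : fsf R J := FSF (fsf_mul_fin f g).

Lemma fsf_scale_fin (a : R) (f : fsf R J) :
  exists s : seq J, forall i, i \notin s -> a * f i = 0.
Proof.
case: (fsf_fin f) => s1 H1; exists s1 => i Hi; by rewrite H1 // mulr0.
Qed.
Definition fsf_scale (a : R) (f : fsf R J) : fsf R J := FSF (fsf_scale_fin a f).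

Lemma fsf_e_fin (i : J) :
  exists s : seq J, forall j, j \notin s -> (if j == i then 1 else 0 : R) = 0.
Proof.
exists [:: i] => j; rewrite inE; by case: (j == i).
Qed.
Definition fsf_e (i : J) : fsf R J := FSF (fsf_e_fin i).

Lemma fsf_tilde_fin (sigma : bij J) (f : fsf R J) :
  exists s : seq J, forall j, j \notin s -> f (bij_inv sigma j) = 0.
Proof.
case: (fsf_fin f) => s1 H1; exists (map sigma s1) => j Hj; apply: H1.
apply: contra Hj => Hin; rewrite -[j](bij_invK sigma); exact: map_f.
Qed.
Definition fsf_tilde (sigma : bij J) (f : fsf R J) : fsf R J :=
  FSF (fsf_tilde_fin sigma f).

Definition fsf_linear (Delta : fsf R J -> fsf R J) : Prop :=
  (forall f g, Delta (fsf_add f g) = fsf_add (Delta f) (Delta g)) /\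
  (forall (a : R) f, Delta (fsf_scale a f) = fsf_scale a (Delta f)).

Definition sigma_derivation (sigma : bij J) (Delta : fsf R J -> fsf R J) : Prop :=
  forall f g, Delta (fsf_mul f g) =
    fsf_add (fsf_mul (fsf_tilde sigma f) (Delta g)) (fsf_mul (Delta f) g).

End Ops.

(* Main.v *)
Require Import Defs.
From HB Require Import structures.
From mathcomp Require Import all_boot all_order all_algebra.
From mathcomp Require Import reals.
From Stdlib Require Import FunctionalExtensionality ProofIrrelevance.
From mathcomp Require Import ring.
Import Order.TTheory GRing.Theory Num.Theory.
Local Open Scope ring_scope.

Lemma fsf_ext (R : realType) (J : countType) (f g : fsf R J) :
  (forall i, f i = g i) -> f = g.
Proof.
case: f g => f Hf [g Hg] /= H.
have E : f = g by apply: functional_extensionality.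
subst g; congr FSF; apply: proof_irrelevance.
Qed.

Lemma Delta0 (R : realType) (J : countType) (Delta : fsf R J -> fsf R J)
  (Hlin : fsf_linear Delta) (f : fsf R J) :
  (forall i, f i = 0) -> forall k, Delta f k = 0.
Proof.
move=> Hf k.
have -> : f = fsf_scale 0 f by apply: fsf_ext => i /=; rewrite Hf mulr0.
by rewrite Hlin.2 /= mul0r.
Qed.

Section Back.
Variables (R : realType) (J : countType) (sigma : bij J)
    (Delta : fsf R J -> fsf R J) (Hlin : fsf_linear Delta).
Hypothesis H : forall i : J,
     Delta (fsf_e R i) (sigma i) = - Delta (fsf_e R (sigma i)) (sigma i) /\
     (forall k : J, k != i -> k != sigma i -> Delta (fsf_e R i) k = 0).

Let a (k : J) := Delta (fsf_e R k) k.

Lemma a_fix k : bij_inv sigma k = k -> a k = 0.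
Proof.
move=> Hk; have Hs : sigma k = k by rewrite -{1}Hk bij_invK.
have := (H k).1; rewrite Hs /a => E.
have : 2%:R * Delta (fsf_e R k) k = 0 by rewrite mulr2n mulrDl mul1r {1}E addNr.
by move/eqP; rewrite mulf_eq0 pnatr_eq0 /= => /eqP.
Qed.

Lemma De x k : Delta (fsf_e R x) k =
  a k * ((if k == x then 1 else 0) - (if bij_inv sigma k == x then 1 else 0)).
Proof.
case: (eqVneq k x) => [->|kx].
  case: (eqVneq (bij_inv sigma x) x) => [E|E].
    by move: (a_fix _ E); rewrite /a => ->; rewrite mul0r.
  by rewrite subr0 mulr1.
case: (eqVneq k (sigma x)) => [->|ksx].
  by rewrite bij_K eqxx sub0r mulrN1 (H x).1.
rewrite (H x).2 //.
have -> : (bij_inv sigma k == x) = false.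
  apply/negbTE; apply: contra ksx => /eqP <-; by rewrite bij_invK.
by rewrite subrr mulr0.
Qed.

Lemma key (s : seq J) : forall f : fsf R J, (forall i, i \notin s -> f i = 0) ->
  forall k, Delta f k = a k * (f k - f (bij_inv sigma k)).
Proof.
elim: s => [|x s IH] f Hf k.
  by rewrite (Delta0 _ _ _ Hlin) // ?Hf // ?subrr ?mulr0 // => i; apply: Hf.
have fin : exists s0 : seq J, forall i, i \notin s0 ->
    (if i == x then 0 else f i) = 0.
  by exists s => i Hi; case: eqP => // /eqP ix; apply: Hf; rewrite inE negb_or ix.
pose f' := FSF fin.
have Ef : f = fsf_add (fsf_scale (f x) (fsf_e R x)) f'.
  apply: fsf_ext => i /=; case: (eqVneq i x) => [->|ix].
    by rewrite mulr1 addr0.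
  by rewrite mulr0 add0r.
have IH' := IH f'.
rewrite Ef Hlin.1 Hlin.2 /= IH' /=; last first.
  by move=> i Hi; case: (eqVneq i x) => // ix; apply: Hf; rewrite inE negb_or ix.
rewrite De.
case: (eqVneq k x) => [E1|kx]; case: (eqVneq (bij_inv sigma k) x) => [E2|jx];
  rewrite ?E2 ?E1 ?eqxx ?(negbTE jx) ?(negbTE kx) ?mulr1 ?mulr0 ?add0r ?addr0; ring.
Qed.

End Back.

Theorem theorem6 (R : realType) (J : countType) (sigma : bij J)
    (Delta : fsf R J -> fsf R J) (Hlin : fsf_linear Delta) :
  sigma_derivation sigma Delta <->
  (forall i : J,
     Delta (fsf_e R i) (sigma i) = - Delta (fsf_e R (sigma i)) (sigma i) /\
     (forall k : J, k != i -> k != sigma i -> Delta (fsf_e R i) k = 0)).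
Proof.
split.
  move=> D i.
  have Hii := D (fsf_e R i) (fsf_e R i).
  have Eii : fsf_mul (fsf_e R i) (fsf_e R i) = fsf_e R i.
    by apply: fsf_ext => j /=; case: eqP; rewrite ?mulr1 ?mulr0.
  rewrite Eii in Hii.
  have Ht : forall j, ((if bij_inv sigma j == i then 1 else 0) : R) = if j == sigma i then 1 else 0.
    move=> j /=; case: (eqVneq j (sigma i)) => [->|n]; first by rewrite bij_K eqxx.
    case: eqP => // E; case/eqP: n; by rewrite -E bij_invK.
  split; last first.
    move=> k ki ksi; have := congr1 (fun h : fsf R J => h k) Hii.
    by rewrite /= Ht (negbTE ki) (negbTE ksi) mul0r mulr0 addr0.
  case: (eqVneq (sigma i) i) => [E|ne].
    have := congr1 (fun h : fsf R J => h i) Hii.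
    rewrite /= Ht E eqxx mulr1 mul1r => X.
    have Z0 : Delta (fsf_e R i) i = 0.
      have : Delta (fsf_e R i) i + Delta (fsf_e R i) i = Delta (fsf_e R i) i + 0 by rewrite addr0 -X.
      by move/addrI.
    by rewrite Z0 oppr0.
  have Z : fsf_mul (fsf_e R i) (fsf_e R (sigma i)) = fsf_scale 0 (fsf_e R i).
    apply: fsf_ext => j /=; rewrite mul0r; case: eqP => [->|]; last by rewrite mul0r.
    by rewrite eq_sym (negbTE ne) mulr0.
  have Hz := D (fsf_e R i) (fsf_e R (sigma i)).
  rewrite Z Hlin.2 in Hz.
  have := congr1 (fun h : fsf R J => h (sigma i)) Hz.
  rewrite /= Ht eqxx.
  rewrite mul0r mul1r mulr1 => X; apply/eqP; rewrite -addr_eq0 addrC -X //.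
move=> H f g; apply: fsf_ext => k.
have K : forall h : fsf R J, forall k, Delta h k =
    Delta (fsf_e R k) k * (h k - h (bij_inv sigma k)).
  by move=> h; case: (fsf_fin h) => s Hs; apply: (@key _ _ _ _ Hlin H _ _ Hs).
rewrite /= (K (fsf_mul f g)) (K g) (K f) /=; ring.
Qed.
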